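(* Let $q$ be a prime power, $n\ge 6$ even, and $\mathcal{L}$ the Desarguesian $2$-spread of $\mathbb{F}_q^n$. Every $4$-dimensional subspace $U$ of $\mathbb{F}_q^n$ that contains exactly one element of $\mathcal{L}$ is adjacent in the Grassmann graph $J_q(n,4)$ to exactly $q+1$ four-dimensional subspaces containing $q^2+1$ elements of $\mathcal{L}$.
   Context: Identify $\mathbb{F}_q^n$ with $\mathbb{F}_{q^n}$, $n$ even, and let $F'=\mathbb{F}_{q^2}$ be its subfield of order $q^2$. The Desarguesian $2$-spread $\mathcal{L}$ is the set of $2$-dimensional $\mathbb{F}_q$-subspaces $F'x=\{\lambda x:\lambda\in F'\}$, $x\ne0$. The Grassmann graph $J_q(n,k)$ has as vertices the $k$-dimensional subspaces of $\mathbb{F}_q^n$, adjacent iff they meet in a $(k-1)$-dimensional subspace. *)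

(* Defs.v *)
From HB Require Import structures.
From mathcomp Require Import all_boot all_order all_algebra all_field.
Set Implicit Arguments. Unset Strict Implicit. Unset Printing Implicit Defensive.
Import GRing.Theory.
Local Open Scope ring_scope.
Local Open Scope vspace_scope.

(* F_q^n is modelled as a field extension L of the finite field F (|F| = q)
   with \dim {:L} = n, viewed as an F-vector space; F' is the subfield of L
   of dimension 2 over F (i.e. of order q^2). *)

Section Spread.
Variables (F : finFieldType) (L : fieldExtType F).

Definition spread_elt (F' : {subfield L}) (x : L) : {vspace L} := (F' * <[x]>)%VS.

Definition in_spread (F' : {subfield L}) (S : {vspace L}) : Prop :=
  exists2 x : L, (x != 0)%R & S = spread_elt F' x.

Definition count_exactly (P : {vspace L} -> Prop) (k : nat) : Prop :=
  exists s : seq {vspace L}, [/\ uniq s, size s = k & forall W, W \in s <-> P W].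

Definition contains_spread (F' : {subfield L}) (U : {vspace L}) (k : nat) : Prop :=
  count_exactly (fun S => in_spread F' S /\ (S <= U)%VS) k.

Definition grassmann_adj (k : nat) (U W : {vspace L}) : Prop :=
  [/\ \dim U = k, \dim W = k & \dim (U :&: W) = k.-1].
End Spread.

(* Main.v *)
Require Import Defs.
From HB Require Import structures.
From mathcomp Require Import all_boot all_order all_algebra all_field.
From mathcomp Require Import ring zify.
Set Implicit Arguments. Unset Strict Implicit. Unset Printing Implicit Defensive.
Import GRing.Theory.

Section Helpers.
Local Open Scope ring_scope.
Variables (F : finFieldType) (L : fieldExtType F) (F' : {subfield L}).
Hypothesis hF' : \dim F' = 2%N.

Notation sp x := (spread_elt F' x).

Lemma sp_memP y x : reflect (exists2 l, l \in F' & y = l * x) (y \in sp x).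
Proof. exact: memv_cosetP. Qed.

Lemma sp_self x : x \in sp x.
Proof. by apply/sp_memP; exists 1; rewrite ?mul1r ?mem1v. Qed.

Lemma sp_dim x : x != 0 -> \dim (sp x) = 2%N.
Proof. by move=> nz; rewrite /spread_elt dim_cosetv. Qed.

Lemma sp_closed l y x : l \in F' -> y \in sp x -> l * y \in sp x.
Proof.
move=> Fl /sp_memP[m Fm ->]; apply/sp_memP; exists (l * m); last by rewrite mulrA.
exact: memvM.
Qed.

Definition Fcl (W : {vspace L}) := forall l w, l \in F' -> w \in W -> l * w \in W.

Lemma sp_Fcl x : Fcl (sp x).
Proof. by move=> l w; apply: sp_closed. Qed.

Lemma Fcl_add U V : Fcl U -> Fcl V -> Fcl (U + V)%VS.
Proof.
move=> hU hV l w Fl /memv_addP[u Uu [v Vv ->]].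
by rewrite mulrDr memv_add ?hU ?hV.
Qed.

Lemma sp_subP x W : Fcl W -> x \in W -> (sp x <= W)%VS.
Proof.
move=> hW Wx; apply/prodvP=> l _ Fl /vlineP[k ->].
by rewrite -scalerAr memvZ // hW.
Qed.

Lemma sp_eq y x : y != 0 -> y \in sp x -> sp y = sp x.
Proof.
move=> nzy yx; have nzx : x != 0.
  by move: yx nzy => /sp_memP[l _ ->]; apply: contraNneq => ->; rewrite mulr0.
apply/eqP; rewrite eqEdim sp_dim // sp_dim // leqnn andbT.
exact: sp_subP (@sp_Fcl x) yx.
Qed.

Lemma sp_cap x y : x != 0 -> y != 0 -> sp x != sp y -> (sp x :&: sp y = 0)%VS.
Proof.
move=> nzx nzy neq; apply/eqP; rewrite -subv0; apply/negPn/negP.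
case/subvPn=> z /memv_capP[zx zy]; rewrite memv0 => nzz.
by move: neq; rewrite -(sp_eq nzz zx) -(sp_eq nzz zy) eqxx.
Qed.

Lemma sp_dim_sum x y : x != 0 -> y != 0 -> sp x != sp y -> \dim (sp x + sp y)%VS = 4%N.
Proof.
move=> nzx nzy neq; have := dimv_sum_cap (sp x) (sp y).
by rewrite sp_cap // dimv0 addn0 !sp_dim.
Qed.

Lemma dim_add_line (U : {vspace L}) v : v \notin U -> \dim (U + <[v]>)%VS = (\dim U).+1.
Proof.
move=> vU; have := dimv_sum_cap U <[v]>; have nzv : v != 0.
  by apply: contraNneq vU => ->; rewrite mem0v.
have -> : (U :&: <[v]> = 0)%VS.
  apply/eqP; rewrite -dimv_eq0; have hle := dimvS (capvSr U <[v]>).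
  rewrite dim_vline nzv in hle.
  have hne : \dim (U :&: <[v]>) != 1%N.
    apply: contra vU => /eqP d1.
    have e : (U :&: <[v]> == <[v]>)%VS by rewrite eqEdim capvSr dim_vline nzv d1.
    by have := memv_line v; rewrite -(eqP e) memv_cap => /andP[].
  by move: hle hne; case: (\dim _) => [|[|]].
by rewrite dimv0 addn0 dim_vline nzv addn1.
Qed.


Lemma exists_alpha : exists2 a, a \in F' & a \notin 1%VS.
Proof.
apply/subvPn; apply/negP => /dimvS; rewrite hF' dimv1 //.
Qed.

Lemma F'_eq a : a \in F' -> a \notin 1%VS -> ((1%VS : {vspace L}) + <[a]>)%VS = F' :> {vspace L}.
Proof.
move=> Fa a1; apply/eqP; rewrite eqEdim subv_add sub1v -memvE Fa /=.
by rewrite dim_add_line // dimv1 hF'.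
Qed.

Lemma F'_decomp (a l : L) : a \in F' -> a \notin 1%VS -> l \in F' ->
  exists s t : F, l = s%:A + t *: a.
Proof.
move=> Fa a1; rewrite -(F'_eq Fa a1) => /memv_addP[u /vlineP[s ->] [v /vlineP[t ->] ->]].
by exists s, t.
Qed.

Lemma lam_in (a : L) (s t : F) : a \in F' -> s%:A + t *: a \in F'.
Proof. by move=> Fa; rewrite rpredD ?memvZ ?mem1v. Qed.

Lemma lam_inj (a : L) (s t s' t' : F) : a \notin 1%VS ->
  s%:A + t *: a = s'%:A + t' *: a -> s = s' /\ t = t'.
Proof.
move=> a1 E.
have E2 : (t' - t) *: a = (s - s')%:A.
  rewrite !scalerBl; apply/eqP; rewrite -subr_eq0; apply/eqP.
  transitivity (-(s%:A + t *: a - (s'%:A + t' *: a))); first ring.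
  by rewrite E subrr oppr0.
have ett : t = t'.
  apply/eqP; apply: contraNT a1; rewrite eq_sym -subr_eq0 => nz.
  by rewrite -(scalerK nz a) E2 memvZ // memvZ // memv_line.
subst t'; split => //; move: E2; rewrite subrr scale0r => /esym/eqP.
by rewrite scaler_eq0 oner_eq0 orbF subr_eq0 => /eqP.
Qed.


Lemma nonzero_in (U V : {vspace L}) : (\dim V < \dim U)%N -> exists2 v, v \in U & v \notin V.
Proof. by move=> lt; apply/subvPn; apply/negP => /dimvS; rewrite leqNgt lt. Qed.

Lemma lemK (W T : {vspace L}) : Fcl W -> \dim W = 4%N -> (T <= W)%VS -> \dim T = 3%N ->
  exists2 v, v != 0 & (sp v <= T)%VS.
Proof.
move=> hW dW TW dT; have [al Fal al1] := exists_alpha.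
have nzal : al != 0 by apply: contraNneq al1 => ->; rewrite mem0v.
set T' := (T * <[al^-1]>)%VS.
have dT' : \dim T' = 3%N by rewrite dim_cosetv ?invr_eq0.
have T'W : (T' <= W)%VS.
  apply/prodvP => t _ Tt /vlineP[k ->].
  by rewrite -scalerAr memvZ // mulrC hW ?memvV // (subvP TW).
have hsum : (\dim (T + T') <= 4)%N by rewrite -dW dimvS // subv_add TW.
have hc := dimv_sum_cap T T'; rewrite dT dT' in hc.
have [v Cv] : exists2 v, v \in (T :&: T')%VS & v \notin 0%VS.
  apply: nonzero_in; rewrite dimv0; lia.
rewrite memv0 => nzv; exists v => //.
case/memv_capP: Cv => Tv /memv_cosetP[t Tt vE].
have alv : al * v \in T by rewrite vE mulrCA divff // mulr1.
apply/prodvP => l _ Fl /vlineP[k ->].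
have [s0 [t0 ->]] := F'_decomp Fal al1 Fl.
rewrite -scalerAr memvZ // mulrDl mulr_algl -scalerAl.
by rewrite rpredD ?memvZ.
Qed.

Lemma lemG a b : a != 0 -> b != 0 -> sp a != sp b ->
  contains_spread F' (sp a + sp b)%VS (#|F| ^ 2 + 1).
Proof.
move=> nza nzb neq; have [al Fal al1] := exists_alpha.
have cap0 := sp_cap nza nzb neq.
pose lam := fun p : F * F => p.1%:A + p.2 *: al.
have lamF p : lam p \in F' by apply: lam_in.
have key l m : l \in F' -> m \in F' -> l * a + m * b = 0 -> l = 0 /\ m = 0.
  move=> Fl Fm E.
  have la : l * a \in (sp a :&: sp b)%VS.
    rewrite memv_cap; apply/andP; split; first by apply/sp_memP; exists l.
    have -> : l * a = - (m * b) by apply/eqP; rewrite -subr_eq0 opprK E.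
    by rewrite memvN; apply/sp_memP; exists m.
  move: la; rewrite cap0 memv0 mulf_eq0 (negPf nza) orbF => /eqP l0.
  by move: E; rewrite l0 mul0r add0r => /eqP; rewrite mulf_eq0 (negPf nzb) orbF => /eqP.
have Wcl : Fcl (sp a + sp b)%VS by apply: Fcl_add; apply: sp_Fcl.
exists ([seq sp (a + lam p * b) | p <- enum {: F * F}] ++ [:: sp b]); split.
- rewrite cat_uniq /= andbT orbF; apply/andP; split.
    rewrite map_inj_uniq ?enum_uniq // => p p' E.
    have := sp_self (a + lam p' * b); rewrite -E => /sp_memP[nu Fnu Enu].
    have [h1 h2] : 1 - nu = 0 /\ lam p' - nu * lam p = 0.
      apply: key; rewrite ?rpredB ?rpredM ?mem1v //.
      transitivity ((a + lam p' * b) - nu * (a + lam p * b)); first ring.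
      by rewrite -Enu subrr.
    move/eqP: h1; rewrite subr_eq0 => /eqP nu1.
    move/eqP: h2; rewrite -nu1 mul1r subr_eq0 => /eqP.
    case: p p' {E Enu} => [s t] [s' t'] /= E.
    by case: (lam_inj al1 (esym E)) => /= -> ->.
  apply/mapP => -[p _ E].
  have := sp_self (a + lam p * b); rewrite -E => /sp_memP[nu Fnu Enu].
  have [h1 _] : (1 : L) = 0 /\ lam p - nu = 0.
    apply: key; rewrite ?rpredB ?mem1v //.
    transitivity ((a + lam p * b) - nu * b); first ring.
    by rewrite -Enu subrr.
  by move/eqP: h1; rewrite oner_eq0.
- by rewrite size_cat size_map /= -cardE card_prod addn1 mulnn.
move=> W; split.
  rewrite mem_cat => /orP[/mapP[p _ ->] | ]; last first.
    rewrite inE => /eqP ->; split; first by exists b.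
    by apply: sp_subP => //; rewrite (subvP (addvSr _ _)) ?sp_self.
  have nzp : a + lam p * b != 0.
    apply/eqP => E; have [h _] : (1 : L) = 0 /\ lam p = 0.
      by apply: key; rewrite ?mem1v // mul1r.
    by move/eqP: h; rewrite oner_eq0.
  split; first by exists (a + lam p * b).
  by apply: sp_subP => //; rewrite memv_add ?sp_self // sp_closed ?sp_self.
case=> -[y nzy ->] sub.
have := subvP sub y (sp_self y) => /memv_addP[u /sp_memP[mu Fmu ->] [v /sp_memP[nu Fnu ->] Ey]].
have [mu0 | nzmu] := eqVneq mu 0.
  move: Ey; rewrite mu0 mul0r add0r => Ey.
  rewrite mem_cat inE (@sp_eq y b nzy) ?eqxx ?orbT // Ey.
  by apply/sp_memP; exists nu.
have Fl : mu^-1 * nu \in F' by rewrite rpredM ?memvV.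
have [s0 [t0 El]] := F'_decomp Fal al1 Fl.
have Ey2 : y = mu * (a + lam (s0, t0) * b).
  by rewrite Ey /lam /= -El mulrDr mulrA mulVKf.
rewrite mem_cat (@sp_eq y (a + lam (s0, t0) * b) nzy); last first.
  by apply/sp_memP; exists mu.
by rewrite (map_f (fun p => sp (a + lam p * b))) ?mem_enum.
Qed.

Lemma main_aux (U : {vspace L}) : \dim U = 4%N -> contains_spread F' U 1 ->
  count_exactly
    (fun W : {vspace L} => grassmann_adj 4 U W /\ contains_spread F' W (#|F| ^ 2 + 1)%N)
    (#|F|).+1.
Proof.
move=> dU [s0 [us ss hs]].
case: s0 us ss hs => [|S0 [|]] //= _ _ hs.
have [[x0 nzx0 eS0] S0U] := (hs S0).1 (mem_head _ _); subst S0.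
have uniqS y : y != 0 -> (sp y <= U)%VS -> sp y = sp x0.
  move=> nzy sub; have := (hs (sp y)).2 (conj (ex_intro2 _ _ y nzy erefl) sub).
  by rewrite inE => /eqP.
have dS := sp_dim nzx0.
have [u1 u1U u1S] := nonzero_in (U := U) (V := sp x0) ltac:(by rewrite dS dU).
have dS1 : \dim (sp x0 + <[u1]>)%VS = 3%N by rewrite dim_add_line // dS.
have [u2 u2U u2S] := nonzero_in (U := U) (V := (sp x0 + <[u1]>)%VS) ltac:(by rewrite dS1 dU).
have eU : (sp x0 + <[u1]> + <[u2]>)%VS = U.
  apply/eqP; rewrite eqEdim !subv_add S0U -!memvE u1U u2U /=.
  by rewrite dim_add_line // dS1 dU.
have indep (c1 c2 : F) : c1 *: u1 + c2 *: u2 \in sp x0 -> c1 = 0 /\ c2 = 0.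
  move=> hin; have c20 : c2 = 0.
    apply/eqP; apply: contraNT u2S => nz.
    have -> : u2 = c2^-1 *: ((c1 *: u1 + c2 *: u2) - c1 *: u1).
      by rewrite [c1 *: u1 + _]addrC addrK scalerK.
    rewrite memvZ // memvB //; first by rewrite (subvP (addvSl _ _)).
    by rewrite (subvP (addvSr _ _)) // memvZ // memv_line.
  split=> //; apply/eqP; apply: contraNT u1S => nz.
  move: hin; rewrite c20 scale0r addr0 => hin.
  by rewrite -(scalerK nz u1) memvZ.
pose Wx x := (sp x0 + sp x)%VS.
have xin x : x \in Wx x by rewrite (subvP (addvSr _ _)) ?sp_self.
have PW x : x \in U -> x \notin sp x0 ->
    [/\ grassmann_adj 4 U (Wx x), contains_spread F' (Wx x) (#|F| ^ 2 + 1)%N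
      & ~~ (U <= Wx x)%VS].
  move=> xU xS; have nzx : x != 0 by apply: contraNneq xS => ->; rewrite mem0v.
  have neq : sp x0 != sp x.
    by apply: contraNneq xS => ->; rewrite sp_self.
  have dW := sp_dim_sum nzx0 nzx neq.
  have nsub : ~~ (U <= Wx x)%VS.
    apply/negP => sub; have eUW : U = Wx x by apply/eqP; rewrite eqEdim sub dU dW.
    move: neq; rewrite (uniqS x nzx) ?eqxx // eUW addvSr //.
  split => //; last exact: lemG.
  split => //=.
  have lo : (sp x0 + <[x]> <= U :&: Wx x)%VS.
    rewrite subv_cap subv_add S0U -memvE xU /= addvS //.
    by rewrite -memvE sp_self.
  have := dimvS lo; rewrite dim_add_line // dS => h3.
  have h4 := dimvS (capvSl U (Wx x)); rewrite dU in h4.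
  have : \dim (U :&: Wx x) != 4%N.
    apply: contra nsub => /eqP d4.
    have /eqP e : (U :&: Wx x == U)%VS by rewrite eqEdim capvSl d4 dU.
    by rewrite -e capvSr.
  move: h3 h4; case: (\dim _) => [|[|[|[|[|]]]]] //.
have subU x : x \in U -> x \notin sp x0 -> u1 \in Wx x -> u2 \in Wx x -> False.
  move=> xU xS h1 h2; have [_ _ /negP] := PW x xU xS; apply.
  by rewrite -eU !subv_add addvSl -!memvE h1 h2.
have xcU (c : F) : u1 + c *: u2 \in U by rewrite rpredD ?memvZ.
have xcS (c : F) : u1 + c *: u2 \notin sp x0.
  apply/negP => h; have := indep 1 c; rewrite scale1r => /(_ h)[/eqP].
  by rewrite oner_eq0.
have u2S0 : u2 \notin sp x0.
  apply/negP => h; have := indep 0 1; rewrite scale0r add0r scale1r => /(_ h)[_ /eqP].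
  by rewrite oner_eq0.
exists ([seq Wx (u1 + c *: u2) | c <- enum F] ++ [:: Wx u2]); split.
- rewrite cat_uniq /= andbT orbF; apply/andP; split.
    rewrite map_inj_uniq ?enum_uniq // => c d E.
    apply/eqP; apply: contraT => ncd.
    have m1 := xin (u1 + c *: u2).
    have m2 : u1 + d *: u2 \in Wx (u1 + c *: u2) by rewrite E xin.
    have m3 : (c - d) *: u2 \in Wx (u1 + c *: u2).
      have -> : (c - d) *: u2 = (u1 + c *: u2) - (u1 + d *: u2) by rewrite scalerBl; ring.
      by rewrite memvB.
    have m4 : u2 \in Wx (u1 + c *: u2).
      have ncd' : c - d != 0 by rewrite subr_eq0.
      by move: (memvZ (c - d)^-1 m3); rewrite scalerK.
    have m5 : u1 \in Wx (u1 + c *: u2).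
      have e : u1 = (u1 + c *: u2) - c *: u2 by ring.
      by move: (memvB m1 (memvZ c m4)); rewrite -e.
    by case: (subU _ (xcU c) (xcS c) m5 m4).
  apply/mapP => -[c _ E].
  have m2 : u2 \in Wx (u1 + c *: u2) by rewrite -E xin.
  have m5 : u1 \in Wx (u1 + c *: u2).
    have e : u1 = (u1 + c *: u2) - c *: u2 by ring.
    by move: (memvB (xin (u1 + c *: u2)) (memvZ c m2)); rewrite -e.
  by case: (subU _ (xcU c) (xcS c) m5 m2).
- by rewrite size_cat size_map -cardE addn1.
move=> W; split.
  rewrite mem_cat => /orP[/mapP[c _ ->] | ].
    by have [? ? _] := PW _ (xcU c) (xcS c).
  rewrite inE => /eqP ->.
  by have [? ? _] := PW _ u2U u2S0.
case=> -[_ dW dUW] [s2 [us2 ss2 hs2]].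
have hF0 : (0 < #|F|)%N by apply/card_gt0P; exists 0.
have hq : (1 < #|F| ^ 2 + 1)%N by rewrite addn1 ltnS expn_gt0 hF0.
case: s2 us2 ss2 hs2 hq => [|A [|B r]] /=; [by move=> _ <- | by move=> _ <- | ].
move=> /andP[nAB _] _ hs2 _; rewrite inE negb_or in nAB; case/andP: nAB => nAB _.
have [[a nza eA] Asub] := (hs2 A).1 (mem_head _ _).
have [[b nzb eB] Bsub] := (hs2 B).1 ltac:(by rewrite !inE eqxx orbT).
subst A B.
have eW : (sp a + sp b)%VS = W.
  by apply/eqP; rewrite eqEdim subv_add Asub Bsub sp_dim_sum // dW.
have Wcl : Fcl W by rewrite -eW; apply: Fcl_add; apply: sp_Fcl.
have [v nzv svT] := lemK Wcl dW (capvSr U W) dUW.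
have S0T : (sp x0 <= U :&: W)%VS.
  by rewrite -(uniqS v nzv) // (subv_trans svT) ?capvSl.
have [w' w'T w'S] := nonzero_in (U := (U :&: W)%VS) (V := sp x0) ltac:(by rewrite dS dUW).
have w'U : w' \in U by rewrite (subvP (capvSl U W)).
move: w'U w'T w'S; rewrite -{1}eU => /memv_addP[z /memv_addP[s1 Ss1 [y1 /vlineP[k1 ->] ->]] [y2 /vlineP[k2 ->] ->]].
move=> w'T w'S.
set w := k1 *: u1 + k2 *: u2.
have wT : w \in (U :&: W)%VS.
  have -> : w = s1 + k1 *: u1 + k2 *: u2 - s1 by rewrite /w; ring.
  by rewrite memvB // (subvP S0T).
have wS : w \notin sp x0.
  apply: contra w'S => h; have -> : s1 + k1 *: u1 + k2 *: u2 = s1 + w by rewrite /w; ring.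
  by rewrite memvD.
have wU : w \in U by rewrite (subvP (capvSl U W)).
have wW : w \in W by rewrite (subvP (capvSr U W)).
have nzw : w != 0 by apply: contraNneq wS => ->; rewrite mem0v.
have [[_ dWw _] _ _] := PW w wU wS.
have eW2 : Wx w = W.
  apply/eqP; rewrite eqEdim subv_add (subv_trans S0T (capvSr U W)) sp_subP //=.
  by rewrite dW dWw.
rewrite -eW2 mem_cat.
have [k10 | nzk1] := eqVneq k1 0.
  have e : sp w = sp u2.
    have h : w \in sp u2 by rewrite /w k10 scale0r add0r memvZ // sp_self.
    exact: sp_eq nzw h.
  have -> : Wx w = Wx u2 by rewrite /Wx e.
  by rewrite inE eqxx orbT.
have e : sp w = sp (u1 + (k2 / k1) *: u2).
  have h : w \in sp (u1 + (k2 / k1) *: u2).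
    have -> : w = k1 *: (u1 + (k2 / k1) *: u2).
      by rewrite /w scalerDr scalerA mulrC divfK.
    by rewrite memvZ // sp_self.
  exact: sp_eq nzw h.
have -> : Wx w = Wx (u1 + (k2 / k1) *: u2) by rewrite /Wx e.
by rewrite (map_f (fun c => Wx (u1 + c *: u2))) ?mem_enum.
Qed.

End Helpers.

Theorem lemma6p2 (F : finFieldType) (L : fieldExtType F) (F' : {subfield L})
    (q n : nat) :
  #|F| = q -> \dim {:L} = n -> ~~ odd n -> 6 <= n -> \dim F' = 2 ->
  forall U : {vspace L}, \dim U = 4 -> contains_spread F' U 1 ->
  count_exactly
    (fun W : {vspace L} => grassmann_adj 4 U W /\ contains_spread F' W (q ^ 2 + 1))
    q.+1.
Proof.
move=> <- _ _ _ hF' U dU hU.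
exact: (main_aux hF' dU hU).
Qed.
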